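(* Let $f(x)=\frac1n\sum_{i=1}^n f_i(x)$ where each $f_i:\mathbb{R}^d\to\mathbb{R}$ is differentiable and $\mu_i$-strongly convex with $\mu_i>0$, and let $x_\star$ be the minimizer of $f$. Let $p_1,\dots,p_n>0$ with $\sum_i p_i=1$, and define $$\mu_{\rm NS}:=\min_i\frac{\mu_i}{np_i},\qquad \sigma_{\star,\rm NS}^2:=\frac1n\sum_{i=1}^n\frac{1}{np_i}\|\nabla f_i(x_\star)\|^2.$$ Consider SPPM-NS: starting from arbitrary $x_0\in\mathbb{R}^d$, at each step $k$ choose $i_k=i$ with probability $p_i$ (independently of the past) and set $x_{k+1}=\operatorname{prox}_{\frac{\gamma}{np_{i_k}}f_{i_k}}(x_k)$. Then for any $\gamma>0$ and $k\ge 0$, $$\mathbb{E}\|x_k-x_\star\|^2\le\left(\frac{1}{1+\gamma\mu_{\rm NS}}\right)^{2k}\|x_0-x_\star\|^2+\frac{\gamma\sigma_{\star,\rm NS}^2}{\gamma\mu_{\rm NS}^2+2\mu_{\rm NS}}.$$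
   Context: $\operatorname{prox}_{\gamma\phi}(y):=\arg\min_{x\in\mathbb{R}^d}\{\phi(x)+\frac{1}{2\gamma}\|x-y\|^2\}$. $\mu$-strong convexity of $g$: $g(y)+\langle\nabla g(y),x-y\rangle+\frac{\mu}{2}\|x-y\|^2\le g(x)$ for all $x,y$. *)

(* Defs.v *)
From HB Require Import structures.
From mathcomp Require Import all_boot all_order all_algebra.
From mathcomp Require Import all_classical all_reals all_analysis.
Set Implicit Arguments. Unset Strict Implicit. Unset Printing Implicit Defensive.
Import Order.TTheory GRing.Theory Num.Theory.
Import numFieldNormedType.Exports.
Local Open Scope classical_set_scope.
Local Open Scope ring_scope.

Section Defs.
Variables (R : realType) (d : nat).
Implicit Types (x y : 'rV[R]_d).

Definition dotp x y : R := \sum_(j < d) x ord0 j * y ord0 j.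
Definition sqnorm x : R := dotp x x.

Definition grad (f : 'rV[R]_d -> R) x : 'rV[R]_d :=
  \row_(j < d) ('D_(delta_mx ord0 j) f x).

Definition strongly_convex (mu : R) (g : 'rV[R]_d -> R) :=
  forall x y, g y + dotp (grad g y) (x - y) + mu / 2 * sqnorm (x - y) <= g x.

(* proximal operator: an argmin of phi(x) + 1/(2 gamma) ||x - y||^2
   (chosen via xget; it is unique whenever it exists, e.g. for strongly convex phi) *)
Definition prox (gamma : R) (phi : 'rV[R]_d -> R) y : 'rV[R]_d :=
  xget 0 [set x | forall z, phi x + (2 * gamma)^-1 * sqnorm (x - y)
                              <= phi z + (2 * gamma)^-1 * sqnorm (z - y)].

Definition sppm_ns (n : nat) (f : 'I_n -> 'rV[R]_d -> R) (p : 'I_n -> R)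
  (gamma : R) (x0 : 'rV[R]_d) (s : seq 'I_n) : 'rV[R]_d :=
  foldl (fun x i => prox (gamma / (n%:R * p i)) (f i) x) x0 s.

(* E ||x_k - xs||^2 where i_0,...,i_{k-1} are i.i.d. with law p *)
Definition sppm_ns_expected_sqdist (n : nat) (f : 'I_n -> 'rV[R]_d -> R)
  (p : 'I_n -> R) (gamma : R) (x0 xs : 'rV[R]_d) (k : nat) : R :=
  \sum_(s : k.-tuple 'I_n)
     (\prod_(i <- s) p i) * sqnorm (sppm_ns f p gamma x0 s - xs).

Definition mu_NS (n : nat) (mu p : 'I_n -> R) : R :=
  inf [set mu i / (n%:R * p i) | i in [set: 'I_n]].

Definition sigma2_NS (n : nat) (f : 'I_n -> 'rV[R]_d -> R) (p : 'I_n -> R)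
  (xs : 'rV[R]_d) : R :=
  n%:R^-1 * \sum_(i < n) (n%:R * p i)^-1 * sqnorm (grad (f i) xs).

End Defs.

(* Main.v *)
Require Import Defs.
From HB Require Import structures.
From mathcomp Require Import all_boot all_order all_algebra.
From mathcomp Require Import all_classical all_reals all_analysis.
Import Order.TTheory GRing.Theory Num.Theory.
From mathcomp Require Import ring lra.
Import numFieldNormedType.Exports.
Local Open Scope classical_set_scope.
Local Open Scope ring_scope.
Section Alg.
Variables (R : realType) (d : nat).
Implicit Types (x y z : 'rV[R]_d).

Lemma dotpC x y : dotp x y = dotp y x.
Proof. by apply: eq_bigr => j _; rewrite mulrC. Qed.

Lemma dotpDl x y z : dotp (x + y) z = dotp x z + dotp y z.
Proof. by rewrite /dotp -big_split; apply: eq_bigr => j _; rewrite mxE mulrDl. Qed.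

Lemma dotpZl (a : R) x y : dotp (a *: x) y = a * dotp x y.
Proof. by rewrite /dotp mulr_sumr; apply: eq_bigr => j _; rewrite mxE mulrA. Qed.

Lemma dotpNl x y : dotp (- x) y = - dotp x y.
Proof. by rewrite -scaleN1r dotpZl mulN1r. Qed.

Lemma dotpBl x y z : dotp (x - y) z = dotp x z - dotp y z.
Proof. by rewrite dotpDl dotpNl. Qed.

Lemma dotpDr x y z : dotp x (y + z) = dotp x y + dotp x z.
Proof. by rewrite dotpC dotpDl !(dotpC x). Qed.

Lemma dotpZr (a : R) x y : dotp x (a *: y) = a * dotp x y.
Proof. by rewrite dotpC dotpZl dotpC. Qed.

Lemma dotpNr x y : dotp x (- y) = - dotp x y.
Proof. by rewrite dotpC dotpNl dotpC. Qed.

Lemma dotpBr x y z : dotp x (y - z) = dotp x y - dotp x z.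
Proof. by rewrite dotpDr dotpNr. Qed.

Lemma sqnorm_ge0 x : 0 <= sqnorm x.
Proof. by apply: sumr_ge0 => j _; rewrite -expr2 sqr_ge0. Qed.

Lemma sqnormD x y : sqnorm (x + y) = sqnorm x + 2 * dotp x y + sqnorm y.
Proof.
rewrite /sqnorm dotpDl !dotpDr (dotpC y x); ring.
Qed.

Lemma sqnormZ (a : R) x : sqnorm (a *: x) = a ^+ 2 * sqnorm x.
Proof. by rewrite /sqnorm dotpZl dotpZr mulrA -expr2. Qed.

Lemma sqnormN x : sqnorm (- x) = sqnorm x.
Proof. by rewrite /sqnorm dotpNl dotpNr opprK. Qed.

Lemma sqnorm_coord x j : (x ord0 j) ^+ 2 <= sqnorm x.
Proof.
rewrite /sqnorm /dotp (bigD1 j) //= expr2 lerDl.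
by apply: sumr_ge0 => i _; rewrite -expr2 sqr_ge0.
Qed.

Lemma dotp_delta x j : dotp x (delta_mx ord0 j) = x ord0 j.
Proof.
rewrite /dotp (bigD1 j) //= mxE !eqxx mulr1 big1 ?addr0 // => i ij.
by rewrite mxE (negbTE ij) andbF mulr0.
Qed.

Lemma dotp_ext x y : (forall v, dotp x v = dotp y v) -> x = y.
Proof.
move=> h; apply/rowP => j; rewrite -!dotp_delta; exact: h.
Qed.

End Alg.
Section Anal.
Variables (R : realType) (d : nat).
Implicit Types (x y z v w : 'rV[R]_d).

Lemma grad_dotp (g : 'rV[R]_d -> R) y w :
  differentiable g y -> dotp (grad g y) w = 'D_w g y.
Proof.
move=> dg; rewrite deriveE // {2}(row_sum_delta w) linear_sum /dotp.
apply: eq_bigr => j _; rewrite mxE deriveE // linearZ /= mulrC.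
by [].
Qed.

Lemma deriveNv (g : 'rV[R]_d -> R) y w :
  differentiable g y -> 'D_(- w) g y = - 'D_w g y.
Proof. by move=> dg; rewrite !deriveE // linearN. Qed.

Lemma D_lower (g : 'rV[R]_d -> R) a v (A B : R) :
  differentiable g a ->
  (forall h : R, 0 < h -> A - h * B <= h^-1 * (g (a + h *: v) - g a)) ->
  A <= 'D_v g a.
Proof.
move=> dg hq.
have dv : derivable g a v := diff_derivable dg.
rewrite /derive.
set q := (fun h : R => h^-1 *: ((g \o shift a) (h *: v) - g a)).
have cr : q @ 0^'+ --> lim (q @ 0^').
  move=> S /dv /nbhs_ballP [e e0 eS].
  by exists e => //= y ye /gt_eqF/negbT/eS; exact.
have cg : (fun h => q h + h * B) @ 0^'+ --> lim (q @ 0^') + 0 * B.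
  apply: cvgD => //; apply: cvgMl.
  exact: (cvg_at_right_filter (cvg_id)).
rewrite mul0r addr0 in cg.
rewrite -(cvg_lim _ cg) //; apply: limr_ge; first by apply/cvg_ex; eexists; exact: cg.
near=> h.
have h0 : 0 < h by near: h; exact: nbhs_right_gt.
rewrite /q /= addrC -lerBlDr; move: (hq h h0) => H.
have -> : h^-1 *: (g (h *: v + a) - g a) = h^-1 * (g (a + h *: v) - g a) by rewrite (addrC (h *: v)).
lra.
Unshelve. all: by end_near.
Qed.

End Anal.
Section Exist.
Variables (R : realType) (d : nat).
Implicit Types (x y z v w : 'rV[R]_d).

Lemma sqnorm_cont y : continuous (fun z : 'rV[R]_d => sqnorm (z - y)).
Proof.
rewrite /sqnorm /dotp.
apply: (@continuous_big _ _ +%R 0 predT add_continuous) => j _ z.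
have e : (fun u : 'rV[R]_d => (u - y) ord0 j) = (fun u => u ord0 j - y ord0 j).
  by apply: funext => u; rewrite !mxE.
have cj : {for z, continuous (fun z : 'rV[R]_d => (z - y) ord0 j)}.
  rewrite e; apply: continuousB; first exact: coord_continuous.
  exact: cst_continuous.
exact: continuousM.
Qed.

Lemma psi_cont (phi : 'rV[R]_d -> R) (a : R) y :
  (forall x, differentiable phi x) ->
  continuous (fun z : 'rV[R]_d => phi z + a * sqnorm (z - y)).
Proof.
move=> dphi z.
have -> : (fun z : 'rV[R]_d => phi z + a * sqnorm (z - y)) =
   phi + (cst a \* (fun z => sqnorm (z - y))) by [].
apply: continuousD; first exact: differentiable_continuous.
apply: continuousM; first exact: cst_continuous.
exact: sqnorm_cont.
Qed.

End Exist.
Section Exist2.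
Variables (R : realType) (d : nat).
Implicit Types (x y z v w : 'rV[R]_d).

Lemma prox_exists (phi : 'rV[R]_d -> R) (mu c : R) y :
  (forall x, differentiable phi x) -> 0 <= mu -> strongly_convex mu phi -> 0 < c ->
  exists x, forall z, phi x + (2 * c)^-1 * sqnorm (x - y)
                      <= phi z + (2 * c)^-1 * sqnorm (z - y).
Proof.
move=> dphi mu0 sc c0.
set a := (2 * c)^-1.
have a0 : 0 < a by rewrite invr_gt0 mulr_gt0.
set psi := fun z => phi z + a * sqnorm (z - y).
set g := grad phi y.
set r := sqnorm g / a ^+ 2.
have r0 : 0 <= r by rewrite divr_ge0 ?sqnorm_ge0 // exprn_ge0 // ltW.
have far : forall z, r < sqnorm (z - y) -> psi y < psi z.
  move=> z hz.
  have h1 := sc z y.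
  have h2 : 0 <= sqnorm (g + a *: (z - y)) by apply: sqnorm_ge0.
  rewrite sqnormD sqnormZ dotpZr in h2.
  have h3 : 0 <= mu / 2 * sqnorm (z - y) by rewrite mulr_ge0 ?divr_ge0 ?sqnorm_ge0.
  have h4 : a ^+ 2 * r = sqnorm g by rewrite /r mulrC divfK // expf_neq0 // gt_eqF.
  have h5 : a ^+ 2 * r < a ^+ 2 * sqnorm (z - y) by rewrite ltr_pM2l // exprn_gt0.
  rewrite /psi subrr /sqnorm /dotp big1 ?mulr0 ?addr0; last by move=> j _; rewrite mxE mulr0.
  rewrite -/(sqnorm (z - y)) -/g in h1 *.
  rewrite -h4 in h2.
  set s := sqnorm (z - y) in h1 h2 h3 h5 *.
  set t := dotp g (z - y) in h1 h2 *.
  have h6 : 0 < a * (2 * (t + a * s)).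
    move: h2 h5; set A := a ^+ 2 * r; set B := a ^+ 2 * s.
    have -> : a * (2 * (t + a * s)) = 2 * (a * t) + 2 * B by rewrite /B expr2; ring.
    lra.
  have h9 : 0 < t + a * s by move: h6; rewrite pmulr_rgt0 // pmulr_rgt0.
  change (phi y < phi z + a * s).
  lra.
set rho := r + 1.
set K := [set v : 'rV[R]_d | forall j, `[y ord0 j - rho, y ord0 j + rho]%classic (v ord0 j)].
have cK : compact K.
  by apply: (@rV_compact _ _ (fun j => `[y ord0 j - rho, y ord0 j + rho]%classic)) => j;
    exact: segment_compact.
have yK : K y.
  move=> j /=; rewrite in_itv /= lerBlDr lerDl ler_wpDl //; lra.
have cpsi0 : continuous psi := @psi_cont R d phi a y dphi.
have cpsi : {within K, continuous psi} by apply: continuous_subspaceT.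
have [x0 x0K minx] := EVT_min_rV (ex_intro _ y yK) cK cpsi.
exists x0 => z; rewrite -/(psi x0) -/(psi z).
have [zK|zK] := pselect (K z).
  by apply: minx; rewrite inE.
apply: ltW; apply: le_lt_trans (minx y _) _; first by rewrite inE.
apply: far.
have [j hj] : exists j, ~ `[y ord0 j - rho, y ord0 j + rho]%classic (z ord0 j).
  by apply/existsNP => H; apply: zK => j; apply: H.
move: hj => /= /negP; rewrite in_itv /= negb_and -!ltNge => hj.
apply: (lt_le_trans _ (@sqnorm_coord R d (z - y) j)); rewrite !mxE.
have r1 : 1 <= rho by rewrite /rho; lra.
set u := z ord0 j; set w := y ord0 j.
have rr : r = rho - 1 by rewrite /rho; lra.
rewrite rr expr2.
case/orP: hj => hj; rewrite -/u -/w in hj *.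
  have h1 : 0 < w - u - rho by lra.
  have h2 : 0 < w - u + rho by lra.
  have := mulr_gt0 h1 h2; nra.
have h1 : 0 < u - w - rho by lra.
have h2 : 0 < u - w + rho by lra.
have := mulr_gt0 h1 h2; nra.
Qed.

End Exist2.
Section Prox.
Variables (R : realType) (d : nat).
Implicit Types (x y z v w : 'rV[R]_d).

Lemma prox_min (phi : 'rV[R]_d -> R) (mu c : R) y :
  (forall x, differentiable phi x) -> 0 <= mu -> strongly_convex mu phi -> 0 < c ->
  forall z, phi (prox c phi y) + (2 * c)^-1 * sqnorm (prox c phi y - y)
                      <= phi z + (2 * c)^-1 * sqnorm (z - y).
Proof.
move=> dphi mu0 sc c0; rewrite /prox.
exact: (xgetPex 0 (@prox_exists R d phi mu c y dphi mu0 sc c0)).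
Qed.

Lemma min_grad (phi : 'rV[R]_d -> R) (c : R) y x :
  (forall x, differentiable phi x) -> 0 < c ->
  (forall z, phi x + (2 * c)^-1 * sqnorm (x - y)
                      <= phi z + (2 * c)^-1 * sqnorm (z - y)) ->
  grad phi x = c^-1 *: (y - x).
Proof.
move=> dphi c0 hmin.
have a0 : 0 < (2 * c)^-1 by rewrite invr_gt0 mulr_gt0.
suff H : forall v, c^-1 * dotp (y - x) v <= 'D_v phi x.
  apply: dotp_ext => v; rewrite grad_dotp // dotpZl.
  apply/eqP; rewrite eq_le H andbT.
  have := H (- v); rewrite deriveNv // dotpNr; lra.
move=> v; apply: (@D_lower R d phi x v _ ((2 * c)^-1 * sqnorm v)) => // h h0.
have := hmin (x + h *: v).
have -> : x + h *: v - y = (x - y) + h *: v.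
  by apply/rowP => j; rewrite !mxE; ring.
rewrite [sqnorm (x - y + _)]sqnormD sqnormZ dotpZr.
have -> : dotp (y - x) v = - dotp (x - y) v.
  by rewrite -dotpNl opprB.
set a := (2 * c)^-1; set t := dotp (x - y) v; set s := sqnorm v.
set D := phi (x + h *: v) - phi x.
have ec : c^-1 = 2 * a by rewrite /a invfM mulrA mulfV ?mulr1 // ?mul1r //.
move=> hm.
have hD : - (a * (2 * (h * t) + h ^+ 2 * s)) <= D.
  rewrite /D; move: hm; set S := sqnorm (x - y); lra.
have -> : c^-1 * - t - h * (a * s) = h^-1 * (- (a * (2 * (h * t) + h ^+ 2 * s))).
  rewrite ec; field; exact: lt0r_neq0.
by apply: ler_wpM2l => //; rewrite invr_ge0 ltW.
Qed.

End Prox.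
Section Step.
Variables (R : realType) (d : nat).
Implicit Types (x y z v w : 'rV[R]_d).

Lemma prox_contr (phi : 'rV[R]_d -> R) (mu c : R) y xs :
  (forall x, differentiable phi x) -> 0 <= mu -> strongly_convex mu phi -> 0 < c ->
  (1 + c * mu) ^+ 2 * sqnorm (prox c phi y - xs)
     <= sqnorm (y - xs - c *: grad phi xs).
Proof.
move=> dphi mu0 sc c0.
set u := prox c phi y.
have hG := @min_grad R d phi c y u dphi c0 (@prox_min R d phi mu c y dphi mu0 sc c0).
set G := grad phi u in hG.
set gs := grad phi xs.
have ey : y = u + c *: G.
  by rewrite hG scalerA mulfV ?gt_eqF // scale1r addrC subrK.
set D := u - xs.
set H := G - gs - mu *: D.
have ew : y - xs - c *: gs = (1 + c * mu) *: D + c *: H.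
  by rewrite ey /D /H; apply/rowP => j; rewrite !mxE; ring.
have mono : 0 <= dotp D H.
  have h1 := sc xs u; have h2 := sc u xs.
  rewrite -/G -/gs in h1 h2.
  have e1 : xs - u = - D by rewrite /D opprB.
  rewrite e1 sqnormN dotpNr in h1.
  rewrite /H dotpC !dotpBl dotpZl.
  rewrite -/D in h2.
  change (dotp D D) with (sqnorm D).
  lra.
rewrite ew -/D [sqnorm (_ *: D + _)]sqnormD !sqnormZ dotpZl dotpZr.
have := @sqnorm_ge0 R d H; have := @sqnorm_ge0 R d D.
have : 0 <= (1 + c * mu) * (c * dotp D H).
  by rewrite mulr_ge0 // ?mulr_ge0 // ?addr_ge0 // ?mulr_ge0 // ltW.
have : 0 <= c ^+ 2 * sqnorm H by rewrite mulr_ge0 ?sqnorm_ge0 // exprn_ge0 // ltW.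
nra.
Qed.

End Step.
Section Main.
Variables (R : realType) (d : nat).
Implicit Types (x y z v w : 'rV[R]_d).

Lemma stationary n (f : 'I_n -> 'rV[R]_d -> R) xs :
  (forall i x, differentiable (f i) x) -> (0 < n)%N ->
  (forall y, n%:R^-1 * \sum_(i < n) f i xs <= n%:R^-1 * \sum_(i < n) f i y) ->
  forall w, \sum_(i < n) dotp (grad (f i) xs) w = 0.
Proof.
move=> df n0 hmin.
have nR : 0 < n%:R^-1 :> R by rewrite invr_gt0 ltr0n.
have hG : forall w, 0 <= \sum_(i < n) dotp (grad (f i) xs) w.
  move=> w.
  rewrite (eq_bigr (fun i => 'D_w (f i) xs)); last by move=> i _; rewrite grad_dotp.
  rewrite -derive_sum; last by move=> i; exact: diff_derivable.
  apply: (@D_lower R d (\sum_(i < n) f i) xs w 0 0).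
    exact: differentiable_sum.
  move=> h h0; rewrite mulr0 subr0 !fct_sumE.
  apply: mulr_ge0; first by rewrite invr_ge0 ltW.
  rewrite subr_ge0; have := hmin (xs + h *: w).
  by rewrite ler_pM2l.
move=> w; apply/eqP; rewrite eq_le hG andbT.
have := hG (- w).
under eq_bigr do rewrite dotpNr.
by rewrite sumrN oppr_ge0.
Qed.

Lemma one_step n (f : 'I_n -> 'rV[R]_d -> R) (mu p : 'I_n -> R) (gamma m : R) xs y :
  (forall i x, differentiable (f i) x) -> (forall i, 0 < mu i) ->
  (forall i, strongly_convex (mu i) (f i)) -> (forall i, 0 < p i) ->
  \sum_(i < n) p i = 1 -> 0 < gamma -> 0 < m ->
  (forall i, m <= mu i / (n%:R * p i)) ->
  (forall w, \sum_(i < n) dotp (grad (f i) xs) w = 0) ->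
  \sum_(i < n) p i * sqnorm (prox (gamma / (n%:R * p i)) (f i) y - xs)
    <= (1 + gamma * m)^-1 ^+ 2 * (sqnorm (y - xs) + gamma ^+ 2 * sigma2_NS f p xs).
Proof.
move=> df mu0 sc p0 sp g0 m0 hm st.
have n0 : (0 < n)%N.
  by case: n f mu p df mu0 sc p0 sp hm st => // f mu p _ _ _ _; rewrite big_ord0 => /eqP; rewrite eq_sym oner_eq0.
have nR : 0 < n%:R :> R by rewrite ltr0n.
set q := (1 + gamma * m)^-1.
have gm0 : 0 < 1 + gamma * m by rewrite addr_gt0 // mulr_gt0.
set A := sqnorm (y - xs).
have key : forall i, p i * sqnorm (prox (gamma / (n%:R * p i)) (f i) y - xs) <=
   q ^+ 2 * (p i * A - 2 * (gamma / n%:R) * dotp (grad (f i) xs) (y - xs)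
             + gamma ^+ 2 * (n%:R^-1 * ((n%:R * p i)^-1 * sqnorm (grad (f i) xs)))).
  move=> i.
  set c := gamma / (n%:R * p i).
  have npi : 0 < n%:R * p i by rewrite mulr_gt0.
  have c0 : 0 < c by rewrite divr_gt0.
  have hc := @prox_contr R d (f i) (mu i) c y xs (df i) (ltW (mu0 i)) (sc i) c0.
  have ee : y - xs - c *: grad (f i) xs = (y - xs) + - (c *: grad (f i) xs) by [].
  rewrite [sqnorm (y - xs - _)]sqnormD sqnormN sqnormZ dotpNr dotpZr -/A in hc.
  set S := sqnorm (prox c (f i) y - xs) in hc *.
  set t := dotp (grad (f i) xs) (y - xs).
  set s := sqnorm (grad (f i) xs) in hc *.
  rewrite dotpC -/t in hc.
  have S0 : 0 <= S by apply: sqnorm_ge0.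
  have hcm : gamma * m <= c * mu i.
    rewrite /c mulrAC -mulrA ler_pM2l //.
  have h1 : (1 + gamma * m) ^+ 2 <= (1 + c * mu i) ^+ 2.
    have : 0 < gamma * m by rewrite mulr_gt0.
    rewrite !expr2; nra.
  have h2 : S <= q ^+ 2 * (A - 2 * (c * t) + c ^+ 2 * s).
    have : (1 + gamma * m) ^+ 2 * S <= A + 2 * - (c * t) + c ^+ 2 * s.
      apply: le_trans hc; apply: ler_wpM2r => //.
    move=> h.
    have -> : S = q ^+ 2 * ((1 + gamma * m) ^+ 2 * S).
      by rewrite /q exprVn mulKf // expf_neq0 // gt_eqF.
    apply: ler_wpM2l; first by rewrite exprn_ge0 // ltW // invr_gt0.
    by move: h; rewrite mulrN.
  have := ler_wpM2l (ltW (p0 i)) h2.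
  move=> h3; apply: (le_trans h3); rewrite le_eqVlt; apply/orP; left; apply/eqP.
  rewrite /c; field.
  by rewrite !gt_eqF.
apply: (le_trans (ler_sum _ (fun i _ => key i))).
rewrite -mulr_sumr; rewrite le_eqVlt; apply/orP; left; apply/eqP; congr (_ * _).
rewrite big_split /= sumrB -mulr_suml sp mul1r.
rewrite (eq_bigr (fun i => (2 * (gamma / n%:R)) * dotp (grad (f i) xs) (y - xs))) // -mulr_sumr st mulr0 subr0.
by rewrite -mulr_sumr /sigma2_NS -mulr_sumr.
Qed.

End Main.
Section Tup.
Variables (R : realType) (d : nat).

Lemma E_succ n (f : 'I_n -> 'rV[R]_d -> R) (p : 'I_n -> R) gamma x0 xs k :
  sppm_ns_expected_sqdist f p gamma x0 xs k.+1 =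
  \sum_(i < n) p i * sppm_ns_expected_sqdist f p gamma
      (prox (gamma / (n%:R * p i)) (f i) x0) xs k.
Proof.
rewrite /sppm_ns_expected_sqdist.
rewrite (reindex (fun ij : 'I_n * k.-tuple 'I_n => [tuple of ij.1 :: ij.2])) /=; last first.
  exists (fun s => (thead s, [tuple of behead s])).
    move=> [i t] _ /=; congr (_, _); last by apply: val_inj.
  by move=> s _; rewrite [RHS](tuple_eta s).
rewrite -(pair_big xpredT xpredT (fun i (t : k.-tuple 'I_n) =>
  (\prod_(j <- [tuple of i :: t]) p j) *
   sqnorm (sppm_ns f p gamma x0 [tuple of i :: t] - xs))) /=.
apply: eq_bigr => i _; rewrite mulr_sumr; apply: eq_bigr => t _.
by rewrite big_cons mulrA.
Qed.

Lemma E_zero n (f : 'I_n -> 'rV[R]_d -> R) (p : 'I_n -> R) gamma x0 xs :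
  sppm_ns_expected_sqdist f p gamma x0 xs 0 = sqnorm (x0 - xs).
Proof.
rewrite /sppm_ns_expected_sqdist (big_pred1 [tuple]) => [|t]; last by apply/esym/eqP; exact: tuple0.
by rewrite big_nil mul1r.
Qed.

End Tup.
Theorem mainTheorem4 (R : realType) (d n : nat)
  (f : 'I_n -> 'rV[R]_d -> R) (mu p : 'I_n -> R) (xs x0 : 'rV[R]_d)
  (gamma : R) (k : nat) :
  (forall i x, differentiable (f i) x) ->
  (forall i, 0 < mu i) ->
  (forall i, strongly_convex (mu i) (f i)) ->
  (forall y, n%:R^-1 * \sum_(i < n) f i xs <= n%:R^-1 * \sum_(i < n) f i y) ->
  (forall i, 0 < p i) ->
  \sum_(i < n) p i = 1 ->
  0 < gamma ->
  sppm_ns_expected_sqdist f p gamma x0 xs k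
    <= (1 + gamma * mu_NS mu p)^-1 ^+ (2 * k) * sqnorm (x0 - xs)
       + gamma * sigma2_NS f p xs
         / (gamma * mu_NS mu p ^+ 2 + 2 * mu_NS mu p).
Proof.
move=> df mu0 sc hmin p0 sp g0.
have n0 : (0 < n)%N.
  by case: n f mu p df mu0 sc hmin p0 sp => // f mu p _ _ _ _ _; rewrite big_ord0 => /eqP; rewrite eq_sym oner_eq0.
have nR : 0 < n%:R :> R by rewrite ltr0n.
set v := fun i => mu i / (n%:R * p i).
have hv : forall i, 0 < v i by move=> i; rewrite /v divr_gt0 // mulr_gt0.
set S := [set mu i / (n%:R * p i) | i in [set: 'I_n]].
have hasl : has_lbound S by exists 0 => _ [j _ <-]; exact/ltW/hv.
set m := mu_NS mu p.
have mle : forall i, m <= v i.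
  by move=> i; apply: (ge_inf hasl); exists i.
have m0 : 0 < m.
  pose i0 := Ordinal n0.
  have [i _ hi] := @arg_minP _ R _ i0 xpredT v isT.
  apply: (lt_le_trans (hv i)); apply: lb_le_inf; first by exists (v i0), i0.
  by move=> _ [j _ <-]; exact: hi.
have st := @stationary R d n f xs df n0 hmin.
set sig := sigma2_NS f p xs.
have sig0 : 0 <= sig.
  rewrite /sig /sigma2_NS; apply: mulr_ge0; first by rewrite invr_ge0 ltW.
  apply: sumr_ge0 => i _; rewrite mulr_ge0 ?sqnorm_ge0 // invr_ge0 ltW // mulr_gt0 //.
set K := gamma * sig / (gamma * m ^+ 2 + 2 * m).
set q := (1 + gamma * m)^-1.
have gm0 : 0 < 1 + gamma * m by rewrite addr_gt0 // mulr_gt0.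
have den0 : 0 < gamma * m ^+ 2 + 2 * m by rewrite addr_gt0 ?mulr_gt0 ?exprn_gt0.
have K0 : 0 <= K.
  by rewrite /K; apply: divr_ge0; [apply: mulr_ge0 =>//; exact: ltW | exact: ltW].
have q0 : 0 <= q by rewrite /q invr_ge0 ltW.
have fix_pt : q ^+ 2 * (gamma ^+ 2 * sig) = (1 - q ^+ 2) * K.
  rewrite /q /K; field.
  by rewrite !gt_eqF.
have claim : forall k x0, sppm_ns_expected_sqdist f p gamma x0 xs k <=
    q ^+ (2 * k) * sqnorm (x0 - xs) + (1 - q ^+ (2 * k)) * K.
  elim=> [|k' IH] x1.
    by rewrite E_zero muln0 expr0 mul1r subrr mul0r addr0.
  rewrite E_succ.
  set Q := q ^+ (2 * k').
  have Q0 : 0 <= Q by rewrite exprn_ge0.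
  apply: (le_trans (ler_sum _ (fun i _ => ler_wpM2l (ltW (p0 i)) (IH _)))).
  under eq_bigr do rewrite mulrDr mulrCA.
  rewrite big_split /= -mulr_sumr -mulr_suml sp mul1r.
  have h1 := @one_step R d n f mu p gamma m xs x1 df mu0 sc p0 sp g0 m0 mle st.
  rewrite -/q -/sig in h1.
  have := ler_wpM2l Q0 h1.
  have -> : q ^+ (2 * k'.+1) = q ^+ 2 * Q by rewrite mulnS exprD.
  set T := \sum_(i < n) _.
  set A := sqnorm (x1 - xs).
  move=> h2.
  have e : (1 - q ^+ 2 * Q) * K = (1 - Q) * K + Q * (q ^+ 2 * (gamma ^+ 2 * sig)).
    by rewrite fix_pt; ring.
  rewrite e.
  have : Q * (q ^+ 2 * (A + gamma ^+ 2 * sig)) = q ^+ 2 * Q * A + Q * (q ^+ 2 * (gamma ^+ 2 * sig)) by ring.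
  rewrite -/Q.
  lra.
apply: (le_trans (claim k x0)).
rewrite -/q -/m -/sig -/K lerD2l.
rewrite -[leRHS]mul1r ler_wpM2r // lerBlDr lerDl exprn_ge0 //.
Qed.
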